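(* Let $\mathcal{F}$ be a finite set of graphs. For every integer $T>0$ and real $\lambda>0$: (i) with $r=\sqrt{T+1}\,n$ and $n\ge r^2/\lambda^2$, $\mathsf{VC}\text{-}\mathsf{dim}\big(\mathbb{H}_{r,\lambda}(\mathcal{E}_{\mathsf{WL},\mathcal{F}}(n,d_T))\big)\in\Theta(r^2/\lambda^2)$; (ii) with $r=\sqrt{T/(T+1)}$ and $n\ge r^2/\lambda^2$, $\mathsf{VC}\text{-}\mathsf{dim}\big(\mathbb{H}_{1,\lambda}(\overline{\mathcal{E}}_{\mathsf{WL},\mathcal{F}}(n,d_T))\big)\in\Theta(1/\lambda^2)$.
   Context: $\mathcal{G}_n$ is the set of (unlabeled, simple, undirected) graphs on $n$ vertices. For a finite set of graphs $\mathcal{F}$, the $1$-WL$_{\mathcal{F}}$ colouring of $G$: $C^{1,\mathcal{F}}_0(v)=(\ell_F(v))_{F\in\mathcal{F}}$, where $\ell_F(v)=1$ if $v$ lies in some $X\subseteq V(G)$ with $G[X]$ isomorphic to $F$ and $0$ otherwise; $C^{1,\mathcal{F}}_t(v)=\mathsf{RELABEL}(C^{1,\mathcal{F}}_{t-1}(v),\{\!\{C^{1,\mathcal{F}}_{t-1}(u):u\in N(v)\}\!\})$ with a fixed injective $\mathsf{RELABEL}$ shared by all graphs. With $\Sigma_t$ the set of colours occurring at round $t$ over all of $\mathcal{G}_n$, $\phi_{\mathcal{F},t}(G)_c$ is the number of vertices of $G$ with colour $c$ at round $t$; $\phi^{(T)}_{\mathsf{WL},\mathcal{F}}(G)=[\phi_{\mathcal{F},0}(G),\dots,\phi_{\mathcal{F},T}(G)]\in\mathbb{R}^{d_T}$,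 and $\overline{\phi^{(T)}_{\mathsf{WL},\mathcal{F}}}$ is its normalisation to unit Euclidean norm. $\mathcal{E}_{\mathsf{WL},\mathcal{F}}(n,d_T)=\{\phi^{(T)}_{\mathsf{WL},\mathcal{F}}\}$, $\overline{\mathcal{E}}_{\mathsf{WL},\mathcal{F}}(n,d_T)=\{\overline{\phi^{(T)}_{\mathsf{WL},\mathcal{F}}}\}$. A sample $(\mathbf{x}_i,y_i)_{i\le s}\subset\mathbb{R}^d\times\{0,1\}$ is $(r,\lambda)$-separable if the $\mathbf{x}_i$ lie in a ball of radius $r$ and the distance between the convex hulls of the two classes is at least $2\lambda$. $\mathbb{H}_{r,\lambda}(\mathcal{E})$ is the set of partial concepts $h:\mathcal{G}_n\to\{0,1,\star\}$ such that every finite list of graphs in $\{G:h(G)\neq\star\}$, labelled by $h$ and embedded by some $\mathrm{emb}\in\mathcal{E}$, is $(r,\lambda)$-separable. VC dimension of a partial concept class: the largest size of a set $\{x_1,\dots,x_m\}$ such that every $\tau\in\{0,1\}^m$ is realised as $h(x_i)=\tau_i$ by some $h$ in the class. *)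

(* Defs.v *)
From HB Require Import structures.
From mathcomp Require Import all_boot all_order all_algebra all_fingroup.
From mathcomp Require Import boolp.
From mathcomp Require Import Rstruct.

Set Implicit Arguments. Unset Strict Implicit. Unset Printing Implicit Defensive.
Import Order.TTheory GRing.Theory Num.Theory.
Local Open Scope ring_scope.

Definition is_sgraph n (E : {set 'I_n * 'I_n}) : bool :=
  [forall x, forall y, ((x, y) \in E) == ((y, x) \in E)] && [forall x, (x, x) \notin E].

Definition graph (n : nat) := {E : {set 'I_n * 'I_n} | is_sgraph E}.

Definition adj n (G : graph n) (x y : 'I_n) : bool := (x, y) \in sval G.

Definition giso n (G G' : graph n) : bool :=
  [exists s : {perm 'I_n}, [forall x, forall y, adj G x y == adj G' (s x) (s y)]].

(* unlabelled graphs on n vertices (the set G_n): isomorphism classes *)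
Definition ugraph (n : nat) :=
  {C : {set graph n} | [exists G, C == [set G' | giso G G']]}.

Definition anygraph := {k : nat & graph k}.

(* l_F(v) = 1 iff v lies in some X with G[X] isomorphic to F:
   X is the image of an injective map f : V(F) -> V(G) that is an
   isomorphism F ~ G[X]. *)
Definition inF n (F : anygraph) (G : graph n) (v : 'I_n) : bool :=
  let: existT k H := F in
  [exists f : {ffun 'I_k -> 'I_n},
     [&& injectiveb f,
         [forall i, forall j, adj H i j == adj G (f i) (f j)] &
         v \in codom f]].

(* Colours are trees; RELABEL(c, M) := Node 1 (c :: canonical sorted list of M),
   which is injective in (c, multiset M). *)
Definition colour := GenTree.tree nat.
Definition cle (a b : colour) : bool := (pickle a <= pickle b)%N.
Definition relabel (c : colour) (M : seq colour) : colour :=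
  GenTree.Node 1 (c :: sort cle M).

Fixpoint wl (Fs : seq anygraph) n (G : graph n) (t : nat) (v : 'I_n) : colour :=
  match t with
  | 0 => GenTree.Node 0 [seq GenTree.Leaf (nat_of_bool (inF F G v)) | F <- Fs]
  | t'.+1 => relabel (wl Fs G t' v) [seq wl Fs G t' u | u <- enum 'I_n & adj G v u]
  end.

(* all (round, colour) pairs with round <= T occurring over G_n:
   the disjoint union Sigma_0 + ... + Sigma_T *)
Definition colour_list (Fs : seq anygraph) (n T : nat) : seq (nat * colour) :=
  undup (flatten [seq flatten [seq [seq (t, wl Fs G t v) | v <- enum 'I_n]
                              | G <- enum {: graph n}] | t <- iota 0 T.+1]).

(* coordinate index type, of cardinality d_T *)
Definition cindex (Fs : seq anygraph) (n T : nat) := seq_sub (colour_list Fs n T).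

Definition vec (I : finType) := I -> Rdefinitions.R.

Definition enorm (I : finType) (x : vec I) : Rdefinitions.R := Num.sqrt (\sum_(i : I) x i ^+ 2).
Definition edist (I : finType) (x y : vec I) : Rdefinitions.R := enorm (fun i => x i - y i).

Definition phiL (Fs : seq anygraph) (n T : nat) (G : graph n) : vec (cindex Fs n T) :=
  fun i => (#|[set v : 'I_n | wl Fs G (ssval i).1 v == (ssval i).2]|)%:R.

(* on unlabelled graphs: via any representative (phiL is isomorphism invariant) *)
Definition phi (Fs : seq anygraph) (n T : nat) (C : ugraph n) : vec (cindex Fs n T) :=
  match [pick G in sval C] with Some G => @phiL Fs n T G | None => fun _ => 0 end.

Definition phibar (Fs : seq anygraph) (n T : nat) (C : ugraph n) : vec (cindex Fs n T) :=
  fun i => @phi Fs n T C i / enorm (@phi Fs n T C).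

Definition E_WL (Fs : seq anygraph) (n T : nat) (e : ugraph n -> vec (cindex Fs n T)) : Prop :=
  e = @phi Fs n T.
Definition Ebar_WL (Fs : seq anygraph) (n T : nat) (e : ugraph n -> vec (cindex Fs n T)) : Prop :=
  e = @phibar Fs n T.

Definition in_hull_class (I : finType) s (x : 'I_s -> vec I) (y : 'I_s -> bool)
    (b : bool) (p : vec I) : Prop :=
  exists a : 'I_s -> Rdefinitions.R,
    [/\ forall k, 0 <= a k,
        forall k, y k != b -> a k = 0,
        \sum_(k | y k == b) a k = 1 &
        forall i, p i = \sum_(k | y k == b) a k * x k i].

Definition separable (I : finType) s (x : 'I_s -> vec I) (y : 'I_s -> bool)
    (r lam : Rdefinitions.R) : Prop :=
  (exists c : vec I, forall k, edist (x k) c <= r) /\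
  (forall p q, in_hull_class x y false p -> in_hull_class x y true q ->
     2 * lam <= edist p q).

(* partial concepts: None stands for the undefined value (star) *)
Definition pconcept (X : Type) := X -> option bool.

Definition Hclass (X : Type) (I : finType) (r lam : Rdefinitions.R) (E : (X -> vec I) -> Prop)
    (h : pconcept X) : Prop :=
  forall s (g : 'I_s -> X), (forall k, h (g k) != None) ->
    exists emb, E emb /\ separable (fun k => emb (g k)) (fun k => odflt false (h (g k))) r lam.

Definition shattered (X : finType) (H : pconcept X -> Prop) (S : {set X}) : Prop :=
  forall tau : X -> bool, exists h, H h /\ forall x, x \in S -> h x = Some (tau x).

Definition VCdim (X : finType) (H : pconcept X -> Prop) : nat :=
  \max_(S : {set X} | `[< shattered H S >]) #|S|.

(* Main.v *)
Require Import Defs.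
From HB Require Import structures.
From mathcomp Require Import all_boot all_order all_algebra all_fingroup.
From mathcomp Require Import boolp Rstruct.
From mathcomp Require Import ring lra zify.
Set Implicit Arguments. Unset Strict Implicit. Unset Printing Implicit Defensive.
Import Order.TTheory GRing.Theory Num.Theory.
Local Open Scope ring_scope.

Notation R := Rdefinitions.R.
Definition norm2 (I : finType) (x : vec I) : R := \sum_i x i ^+ 2.

Lemma norm2_ge0 (I : finType) (x : vec I) : 0 <= norm2 x.
Proof. by apply: sumr_ge0 => i _; rewrite sqr_ge0. Qed.

Lemma norm2D (I : finType) (S t : vec I) :
  norm2 (fun i => S i + t i) = norm2 S + 2 * \sum_i S i * t i + norm2 t.
Proof.
rewrite /norm2 mulr_sumr -!big_split /=; apply: eq_bigr => i _; ring.
Qed.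

Lemma norm2N (I : finType) (t : vec I) : norm2 (fun i => - t i) = norm2 t.
Proof. by apply: eq_bigr => i _; rewrite sqrrN. Qed.

Lemma greedy (I : finType) p (u : 'I_p -> vec I) : exists s : 'I_p -> bool,
  norm2 (fun i => \sum_j (if s j then u j i else - u j i)) <= \sum_j norm2 (u j).
Proof.
elim: p u => [|p IH] u.
  exists (fun _ => true); rewrite big_ord0 /norm2.
  rewrite (eq_bigr (fun _ => 0)) ?big1 // => i _; by rewrite big_ord0 expr0n.
have [s Hs] := IH (fun j => u (widen_ord (leqnSn p) j)).
set S := (fun i => \sum_j (if s j then u (widen_ord (leqnSn p) j) i
                            else - u (widen_ord (leqnSn p) j) i)) in Hs.
set D := \sum_i S i * u ord_max i.
exists (fun k : 'I_p.+1 => if insub (val k) is Some j then s j else (D <= 0)).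
rewrite big_ord_recr /=.
have E : forall i, \sum_(j < p.+1)
   (if (if insub (val j) is Some j0 then s j0 else (D <= 0)) then u j i else - u j i)
   = S i + (if D <= 0 then u ord_max i else - u ord_max i).
  move=> i; rewrite big_ord_recr /=; congr (_ + _).
    by apply: eq_bigr => j _; rewrite /= (valK j).
  by rewrite insubF ?ltnn.
have -> : norm2 (fun i => \sum_(j < p.+1)
   (if (if insub (val j) is Some j0 then s j0 else (D <= 0)) then u j i else - u j i))
   = norm2 (fun i => S i + (if D <= 0 then u ord_max i else - u ord_max i)).
  by apply: eq_bigr => i _; rewrite E.
have -> : norm2 (fun i => S i + (if D <= 0 then u ord_max i else - u ord_max i))
   = norm2 S + 2 * \sum_i S i * (if D <= 0 then u ord_max i else - u ord_max i)
     + norm2 (u ord_max).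
  rewrite (norm2D S (fun i => if D <= 0 then u ord_max i else - u ord_max i)).
  by case: (D <= 0) => //; rewrite norm2N.
have [HD|HD] := boolP (D <= 0).
  rewrite -/D; lra.
have -> : \sum_i S i * - u ord_max i = - D by rewrite /D -sumrN; apply: eq_bigr => i _; rewrite mulrN.
move: HD; rewrite -ltNge => HD; lra.
Qed.

Lemma norm2_scale (I : finType) (c : R) (v : vec I) :
  norm2 (fun i => c * v i) = c ^+ 2 * norm2 v.
Proof. by rewrite /norm2 mulr_sumr; apply: eq_bigr => i _; rewrite exprMn. Qed.

Lemma edist_le (I : finType) (a b : vec I) r :
  edist a b <= r -> norm2 (fun i => a i - b i) <= r ^+ 2.
Proof.
rewrite /edist /enorm -/(norm2 _) => H.
rewrite -(sqr_sqrtr (norm2_ge0 (fun i => a i - b i))).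
have := sqrtr_ge0 (norm2 (fun i => a i - b i)); move: H.
set t := Num.sqrt _ => H1 H2; nra.
Qed.

Lemma edist_ge (I : finType) (a b : vec I) r :
  0 <= r -> r <= edist a b -> r ^+ 2 <= norm2 (fun i => a i - b i).
Proof.
rewrite /edist /enorm -/(norm2 _) => H0 H.
rewrite -(sqr_sqrtr (norm2_ge0 (fun i => a i - b i))).
move: H; set t := Num.sqrt _ => H1; nra.
Qed.

Lemma norm2_tri (I : finType) (a b c : vec I) :
  norm2 (fun i => a i - b i) <=
  2 * norm2 (fun i => a i - c i) + 2 * norm2 (fun i => b i - c i).
Proof.
rewrite /norm2 !mulr_sumr -big_split /=; apply: ler_sum => i _.
have := sqr_ge0 (a i + b i - 2 * c i); nra.
Qed.

Lemma hull_pairs (I : finType) p (x : 'I_(p + p) -> vec I) (y : 'I_(p + p) -> bool)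
  (s : 'I_p -> bool) b :
  (0 < p)%N -> (forall j, y (lshift p j) = ~~ s j) -> (forall j, y (rshift p j) = s j) ->
  in_hull_class x y b (fun i => \sum_(k | y k == b) p%:R^-1 * x k i).
Proof.
move=> p0 ly ry.
have pn0 : p%:R != 0 :> R by rewrite pnatr_eq0 -lt0n.
exists (fun k => if y k == b then p%:R^-1 else 0); split.
- by move=> k; case: ifP => _ //; rewrite invr_ge0 ler0n.
- by move=> k /negbTE ->.
- rewrite big_mkcond big_split_ord /= -big_split /=.
  rewrite (eq_bigr (fun _ => p%:R^-1)).
    by rewrite sumr_const card_ord -(mulr_natl (p%:R^-1)) divff.
  by move=> j _; rewrite ly ry; case: (s j); case: b => /=; rewrite ?addr0 ?add0r.
- by move=> i; apply: eq_bigr => k ->.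
Qed.

Lemma diff_pairs (I : finType) p (x : 'I_(p + p) -> vec I) (y : 'I_(p + p) -> bool)
  (s : 'I_p -> bool) (c : R) i :
  (forall j, y (lshift p j) = ~~ s j) -> (forall j, y (rshift p j) = s j) ->
  \sum_(k | y k == false) c * x k i - \sum_(k | y k == true) c * x k i =
  c * \sum_j (if s j then x (lshift p j) i - x (rshift p j) i
              else - (x (lshift p j) i - x (rshift p j) i)).
Proof.
move=> ly ry.
rewrite !(big_mkcond (fun k => y k == _)) !big_split_ord /= -!big_split /=.
rewrite -sumrB mulr_sumr; apply: eq_bigr => j _.
rewrite ly ry; case: (s j) => /=; ring.
Qed.

Lemma upper (X I : finType) (f : X -> vec I) (r lam : R) (S : {set X}) :
  0 < lam -> shattered (Hclass r lam (fun e => e = f)) S ->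
  #|S|%:R <= 2 * (r ^+ 2 / lam ^+ 2) + 1.
Proof.
move=> lam0 Hsh.
have rl0 : 0 <= r ^+ 2 / lam ^+ 2 by rewrite divr_ge0 ?sqr_ge0.
have Hm : #|S| = (odd #|S| + (#|S|./2 + #|S|./2))%N by rewrite addnn odd_double_half.
set p := #|S|./2 in Hm.
have [p0|pgt0] := posnP p.
  have : (#|S| <= 1)%N by rewrite Hm p0 addn0; case: odd.
  rewrite -(ler_nat R) => H; lra.
have H2p : (p + p <= #|S|)%N by rewrite [X in (_ <= X)%N]Hm leq_addl.
pose e := (enum_val : 'I_#|S| -> X).
pose g := fun k : 'I_(p + p) => e (widen_ord H2p k).
have ginj : injective g.
  by move=> k1 k2 /enum_val_inj /(congr1 val) /= H; apply: val_inj.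
have gS : forall k, g k \in S by move=> k; apply: enum_valP.
pose u := fun j i => f (g (lshift p j)) i - f (g (rshift p j)) i.
have [s Hs] := greedy u.
pose lab := fun k : 'I_(p + p) => match split k with inl j => ~~ s j | inr j => s j end.
have labl : forall j, lab (lshift p j) = ~~ s j.
  by move=> j; rewrite /lab -[lshift p j]/(unsplit (inl j)) unsplitK.
have labr : forall j, lab (rshift p j) = s j.
  by move=> j; rewrite /lab -[rshift p j]/(unsplit (inr j)) unsplitK.
pose tau := fun x => [exists k, (g k == x) && lab k].
have tauE : forall k, tau (g k) = lab k.
  move=> k; rewrite /tau; apply/existsP/idP => [[k' /andP[/eqP /ginj -> //]] | Hk].
  by exists k; rewrite eqxx.
have [h [Hh Hhs]] := Hsh tau.
have Hdef : forall k, h (g k) != None by move=> k; rewrite Hhs ?gS.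
have [emb [Hemb [[c Hc] Hsep]]] := Hh _ g Hdef.
subst emb.
have yE : (fun k => odflt false (h (g k))) = lab.
  by apply: funext => k; rewrite Hhs ?gS //= tauE.
rewrite yE in Hc Hsep.
have ly : forall j, lab (lshift p j) = ~~ s j by [].
have := Hsep _ _ (hull_pairs (fun k => f (g k)) false pgt0 labl labr)
                 (hull_pairs (fun k => f (g k)) true pgt0 labl labr).
move/(edist_ge _); rewrite pmulr_rge0 // => /(_ (ltW lam0)).
move=> Hlow.
have E : (fun i => \sum_(k | lab k == false) p%:R^-1 * f (g k) i
                 - \sum_(k | lab k == true) p%:R^-1 * f (g k) i)
       = (fun i => p%:R^-1 * \sum_j (if s j then u j i else - u j i)).
  by apply: funext => i; exact: (diff_pairs (fun k => f (g k)) _ _ labl labr).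
rewrite E norm2_scale in Hlow.
have Hup : \sum_j norm2 (u j) <= p%:R * (4 * r ^+ 2).
  apply: (@le_trans _ _ (\sum_(j < p) (4 * r ^+ 2))); last first.
    by rewrite sumr_const card_ord [X in _ <= X]mulr_natl.
  apply: ler_sum => j _.
  apply: le_trans (norm2_tri _ _ c) _.
  have := edist_le (Hc (lshift p j)); have := edist_le (Hc (rshift p j)).
  move=> H1 H2; lra.
have p0' : 0 < p%:R :> R by rewrite ltr0n.
have Hs' := le_trans Hs Hup.
have H3 : (2 * lam) ^+ 2 <= p%:R^-1 ^+ 2 * (p%:R * (4 * r ^+ 2)).
  apply: le_trans Hlow _; apply: ler_wpM2l; first by rewrite sqr_ge0.
  exact: Hs'.
have H4 : p%:R * lam ^+ 2 <= r ^+ 2.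
  have E2 : p%:R^-1 ^+ 2 * (p%:R * (4 * r ^+ 2)) = 4 * r ^+ 2 / p%:R.
    by field; rewrite lt0r_neq0.
  rewrite E2 ler_pdivlMr // in H3; nra.
have H5 : p%:R <= r ^+ 2 / lam ^+ 2 by rewrite ler_pdivlMr ?exprn_gt0.
have H6 : #|S|%:R <= 1 + 2 * p%:R :> R.
  rewrite {1}Hm natrD natrD; have : (odd #|S|)%:R <= 1 :> R by case: odd.
  move=> ?; lra.
lra.
Qed.


Lemma sum_cond_zero (J : finType) (c : pred J) (F : J -> R) :
  (forall j, ~~ c j -> F j = 0) -> \sum_(j | c j) F j = \sum_j F j.
Proof.
move=> H; rewrite [RHS](bigID c) /= [X in _ + X]big1 ?addr0 //.
Qed.

Lemma cauchy_sum m (z : 'I_m -> R) :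
  (\sum_k z k) ^+ 2 <= m%:R * \sum_k z k ^+ 2.
Proof.
set Z := \sum_k z k; set Q := \sum_k z k ^+ 2.
have H : 0 <= \sum_(k : 'I_m) (m%:R * z k - Z) ^+ 2.
  by apply: sumr_ge0 => k _; rewrite sqr_ge0.
have E : \sum_(k : 'I_m) (m%:R * z k - Z) ^+ 2 = m%:R * (m%:R * Q - Z ^+ 2).
  rewrite (eq_bigr (fun k => m%:R ^+ 2 * z k ^+ 2 + ((- (2 * m%:R * Z)) * z k + Z ^+ 2)));
    last by move=> k _; ring.
  rewrite big_split big_split /= sumr_const card_ord -!mulr_sumr -/Z -/Q.
  rewrite -mulr_natr; ring.
case: m z @Z @Q H E => [|m] z Z Q H E.
  by rewrite /Z big_ord0 expr0n /= mul0r.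
rewrite E pmulr_rge0 ?ltr0n // subr_ge0 in H; exact: H.
Qed.

Lemma sum_inj_le (J I : finType) (h : J -> I) (F : I -> R) :
  injective h -> (forall i, 0 <= F i) -> \sum_j F (h j) <= \sum_i F i.
Proof.
move=> hinj F0.
have E1 : \sum_(i in [set h x | x in [set: J]]) F i = \sum_(j in [set: J]) F (h j).
  by rewrite big_imset //; move=> x y _ _; apply: hinj.
have E2 : \sum_(j in [set: J]) F (h j) = \sum_j F (h j).
  by apply: eq_bigl => j; rewrite inE.
rewrite -E2 -E1 big_mkcond /=; apply: ler_sum => i _; case: ifP => _ //.
Qed.

Lemma sep_generic (X I : finType) (T m : nat) (emb : X -> vec I) (Cs : 'I_m -> X)
  (idx : 'I_T * 'I_m -> I) (alpha lam : R) s (g : 'I_s -> X) (Y : X -> bool) (P Q : vec I) :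
  injective Cs -> injective idx ->
  (forall t k k', emb (Cs k') (idx (t, k)) = if k' == k then alpha else 0) ->
  (forall j, exists k, g j = Cs k) -> (0 < m)%N -> 0 <= lam ->
  lam ^+ 2 * m%:R <= T%:R * alpha ^+ 2 ->
  in_hull_class (fun j => emb (g j)) (fun j => Y (g j)) false P ->
  in_hull_class (fun j => emb (g j)) (fun j => Y (g j)) true Q ->
  2 * lam <= edist P Q.
Proof.
move=> Cinj iinj Hval Hg m0 lam0 Hlm [a [a0 az a1 aP]] [b [b0 bz b1 bQ]].
have a1' : \sum_j a j = 1 by rewrite -a1 sum_cond_zero // => j /az.
have b1' : \sum_j b j = 1 by rewrite -b1 sum_cond_zero // => j /bz.
have aP' : forall i, P i = \sum_j a j * emb (g j) i.
  by move=> i; rewrite aP sum_cond_zero // => j /az ->; rewrite mul0r.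
have bQ' : forall i, Q i = \sum_j b j * emb (g j) i.
  by move=> i; rewrite bQ sum_cond_zero // => j /bz ->; rewrite mul0r.
pose z k := \sum_j (if g j == Cs k then a j + b j else 0).
have Hind : forall j, \sum_k (if g j == Cs k then 1 else 0) = 1 :> R.
  move=> j; have [k0 ->] := Hg j.
  rewrite (bigD1 k0) //= eqxx big1 ?addr0 // => k Hk.
  by rewrite (inj_eq Cinj) eq_sym (negbTE Hk).
have Hz : \sum_k z k = 2.
  rewrite /z exchange_big /=.
  rewrite (eq_bigr (fun j => a j + b j)); last first.
    move=> j _; rewrite -[RHS]mulr1 -(Hind j) mulr_sumr; apply: eq_bigr => k _.
    by case: ifP => _; rewrite ?mulr1 ?mulr0.
  by rewrite big_split /= a1' b1'.
have Hdiff : forall t k, P (idx (t, k)) - Q (idx (t, k))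
    = alpha * \sum_j (if g j == Cs k then a j - b j else 0).
  move=> t k; rewrite aP' bQ' -sumrB mulr_sumr; apply: eq_bigr => j _.
  have [k' ->] := Hg j; rewrite Hval (inj_eq Cinj).
  by case: ifP => _; ring.
have Hsq : forall k, (\sum_j (if g j == Cs k then a j - b j else 0)) ^+ 2 = z k ^+ 2.
  move=> k.
  have [HY|HY] := boolP (Y (Cs k)).
    have -> : \sum_j (if g j == Cs k then a j - b j else 0) = - z k.
      rewrite /z -sumrN; apply: eq_bigr => j _; case: ifP => // /eqP Hj.
        have -> : a j = 0 by apply: az; rewrite Hj HY.
        ring.
      by rewrite oppr0.
    by rewrite sqrrN.
  congr (_ ^+ 2); apply: eq_bigr => j _; case: ifP => // /eqP Hj.
  have -> : b j = 0 by apply: bz; rewrite Hj (negbTE HY).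
  ring.
have E : \sum_(p : 'I_T * 'I_m) (P (idx p) - Q (idx p)) ^+ 2
         = T%:R * alpha ^+ 2 * \sum_k z k ^+ 2.
  transitivity (\sum_(t : 'I_T) \sum_(k : 'I_m) (P (idx (t, k)) - Q (idx (t, k))) ^+ 2).
    by rewrite pair_big /=; apply: eq_bigr => -[t k] _.
  rewrite (eq_bigr (fun t => alpha ^+ 2 * \sum_k z k ^+ 2)).
    by rewrite sumr_const card_ord -(mulr_natl (alpha ^+ 2 * _)) mulrA.
  move=> t _; rewrite mulr_sumr; apply: eq_bigr => k _; rewrite Hdiff exprMn Hsq.
  done.
have Hlow : T%:R * alpha ^+ 2 * \sum_k z k ^+ 2 <= norm2 (fun i => P i - Q i).
  rewrite -E /norm2; apply: (@sum_inj_le _ _ idx (fun i => (P i - Q i) ^+ 2) iinj).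
  by move=> i; rewrite sqr_ge0.
have Hcs := cauchy_sum z; rewrite Hz in Hcs.
have M0 : 0 < m%:R :> R by rewrite ltr0n.
set A := T%:R * alpha ^+ 2 in Hlm Hlow.
set Z2 := \sum_k z k ^+ 2 in Hlow Hcs.
set N2 := norm2 _ in Hlow.
have A0 : 0 <= A by apply: le_trans Hlm; rewrite mulr_ge0 ?sqr_ge0 ?ler0n.
have h1 : 0 <= A * (m%:R * Z2 - 2 ^+ 2) by apply: mulr_ge0 => //; rewrite subr_ge0.
have h2 : 0 <= m%:R * (N2 - A * Z2) by apply: mulr_ge0; [exact: ltW | rewrite subr_ge0].
have h3 : 0 <= m%:R * (N2 - (2 * lam) ^+ 2) by lra.
rewrite pmulr_rge0 // subr_ge0 in h3.
rewrite /edist /enorm -/(norm2 _) -/N2.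
rewrite -[2 * lam]ger0_norm ?mulr_ge0 // -sqrtr_sqr ler_sqrt //.
exact: norm2_ge0.
Qed.

Lemma shatter_lower (X I : finType) (T m : nat) (emb : X -> vec I) (Cs : 'I_m -> X)
  (idx : 'I_T * 'I_m -> I) (alpha r lam : R) :
  injective Cs -> injective idx ->
  (forall t k k', emb (Cs k') (idx (t, k)) = if k' == k then alpha else 0) ->
  (forall k, edist (emb (Cs k)) (fun _ => 0) <= r) -> (0 < m)%N -> 0 <= lam ->
  lam ^+ 2 * m%:R <= T%:R * alpha ^+ 2 ->
  (m <= VCdim (Hclass r lam (fun e => e = emb)))%N.
Proof.
move=> Cinj iinj Hval Hr m0 lam0 Hlm.
set S := [set Cs k | k in [set: 'I_m]].
have cS : #|S| = m by rewrite card_imset // cardsT card_ord.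
rewrite -{1}cS /VCdim; apply: (leq_bigmax_cond (F := fun S0 : {set X} => #|S0|) S).
apply: asboolT => tau.
exists (fun x => if x \in S then Some (tau x) else None); split; last first.
  by move=> x ->.
move=> s g Hdef; exists emb; split => //.
have Hg : forall j, exists k, g j = Cs k.
  move=> j; move: (Hdef j); case: ifP => // /imsetP [k _ ->] _; by exists k.
split.
  by exists (fun _ => 0) => j; have [k ->] := Hg j; exact: Hr.
move=> P Q HP HQ.
pose Y := fun x => odflt false (if x \in S then Some (tau x) else None).
exact: (@sep_generic X I T m emb Cs idx alpha lam s g Y P Q Cinj iinj Hval Hg m0 lam0 Hlm HP HQ).
Qed.

Local Close Scope ring_scope.


Lemma cle_total : total cle.
Proof. by move=> a b; rewrite /cle leq_total. Qed.
Lemma cle_trans : transitive cle.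
Proof. by move=> b a c; rewrite /cle; apply: leq_trans. Qed.
Lemma cle_anti : antisymmetric cle.
Proof. by move=> a b /anti_leq; apply: (pcan_inj pickleK). Qed.

Lemma inF_iso1 (F : anygraph) n (G G' : graph n) (s : {perm 'I_n}) v :
  (forall x y, adj G x y = adj G' (s x) (s y)) -> inF F G v -> inF F G' (s v).
Proof.
case: F => k H /= Hs /existsP [f /and3P [finj /forallP Hadj Hv]].
apply/existsP; exists [ffun i => s (f i)]; apply/and3P; split.
- apply/injectiveP => i j; rewrite !ffunE => /perm_inj; exact: (injectiveP _ finj).
- apply/forallP => i; apply/forallP => j; rewrite !ffunE -Hs.
  by move/forallP: (Hadj i) => /(_ j).
- by case/codomP: Hv => i ->; apply/codomP; exists i; rewrite ffunE.
Qed.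

Lemma inF_iso (F : anygraph) n (G G' : graph n) (s : {perm 'I_n}) v :
  (forall x y, adj G x y = adj G' (s x) (s y)) -> inF F G v = inF F G' (s v).
Proof.
move=> Hs; apply/idP/idP; first exact: inF_iso1.
have Hs' : forall x y, adj G' x y = adj G ((s^-1)%g x) ((s^-1)%g y).
  by move=> x y; rewrite Hs !permKV.
by move/(inF_iso1 Hs'); rewrite permK.
Qed.

Lemma wl_iso Fs n (G G' : graph n) (s : {perm 'I_n}) :
  (forall x y, adj G x y = adj G' (s x) (s y)) ->
  forall t v, wl Fs G t v = wl Fs G' t (s v).
Proof.
move=> Hs; elim=> [|t IH] v /=.
  by congr GenTree.Node; apply: eq_map => F; rewrite (inF_iso _ _ Hs).
rewrite /relabel IH; congr (GenTree.Node 1 (_ :: _)).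
apply/(perm_sortP cle_total cle_trans cle_anti).
have -> : [seq wl Fs G t u | u <- enum 'I_n & adj G v u] =
          [seq wl Fs G' t u | u <- [seq s u | u <- enum 'I_n & adj G v u]].
  by rewrite -map_comp; apply: eq_map => u /=; rewrite IH.
apply: perm_map; apply: uniq_perm.
- rewrite map_inj_uniq; [by rewrite filter_uniq ?enum_uniq | exact: perm_inj].
- by rewrite filter_uniq ?enum_uniq.
- move=> u; rewrite mem_filter mem_enum andbT; apply/mapP/idP.
    by case=> w; rewrite mem_filter mem_enum andbT Hs => Hw ->.
  move=> Hu; exists ((s^-1)%g u); last by rewrite permKV.
  by rewrite mem_filter mem_enum andbT Hs permKV.
Qed.

Definition cd n (x y : 'I_n) : nat := minn ((x + n - y) %% n) ((y + n - x) %% n).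
Definition circE n (k : nat) : {set 'I_n * 'I_n} :=
  [set e | (e.1 != e.2) && (cd e.1 e.2 <= k)%N].
Lemma circ_sg n k : is_sgraph (circE n k).
Proof.
apply/andP; split.
  by apply/forallP => x; apply/forallP => y; rewrite !inE /= [y == x]eq_sym /cd [minn ((y + n - x) %% n) _]minnC eqxx.
by apply/forallP => x; rewrite !inE /= eqxx.
Qed.
Definition circ n k : graph n := exist _ (circE n k) (circ_sg n k).
Lemma adj_circ n k x y : adj (circ n k) x y = (x != y) && (cd x y <= k)%N.
Proof. by rewrite /adj inE. Qed.

Lemma shift_mod n a b : (a < n)%N -> (b < n)%N ->
  ((a.+1 %% n) + n - (b.+1 %% n)) %% n = (a + n - b) %% n.
Proof.
move=> Ha Hb.
have key : forall X Y, (X = Y \/ X = Y + n \/ Y = X + n)%N -> X %% n = Y %% n.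
  by move=> X Y [->|[->|->]]; rewrite ?modnDr.
apply: key.
case: (ltnP a.+1 n) => Ha1; case: (ltnP b.+1 n) => Hb1.
- rewrite !modn_small //; left; lia.
- have Eb : b.+1 = n by lia.
  rewrite Eb modnn (modn_small Ha1); right; left; lia.
- have Ea : a.+1 = n by lia.
  rewrite Ea modnn (modn_small Hb1); right; right; lia.
- have Ea : a.+1 = n by lia.
  have Eb : b.+1 = n by lia.
  rewrite Ea Eb modnn; left; lia.
Qed.

Definition rot n : {perm 'I_n} := perm (@ordS_inj n).

Lemma adj_rot n k x y : adj (circ n k) (rot n x) (rot n y) = adj (circ n k) x y.
Proof.
rewrite !adj_circ !permE (inj_eq (@ordS_inj n)) /cd /=.
by rewrite !shift_mod.
Qed.

Lemma wl_circ_uniform Fs n k t (v : 'I_n.+1) :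
  wl Fs (circ n.+1 k) t v = wl Fs (circ n.+1 k) t ord0.
Proof.
have Hr : forall u, wl Fs (circ n.+1 k) t (rot n.+1 u) = wl Fs (circ n.+1 k) t u.
  move=> u; symmetry; apply: wl_iso => x y; by rewrite adj_rot.
suff H : forall j (v : 'I_n.+1), val v = j -> wl Fs (circ n.+1 k) t v = wl Fs (circ n.+1 k) t ord0.
  exact: H _ v erefl.
elim=> [|j IH] w Hw.
  by congr wl; apply: val_inj.
have Hj : (j < n.+1)%N by have := ltn_ord w; rewrite Hw; apply: ltnW.
have -> : w = rot n.+1 (Ordinal Hj).
  apply: val_inj; rewrite permE /= Hw modn_small // -Hw; exact: ltn_ord.
by rewrite Hr; apply: IH.
Qed.

Lemma sizeP n (P : pred 'I_n) : size [seq u <- enum 'I_n | P u] = #|[set u | P u]|.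
Proof.
rewrite cardsE cardE /enum_mem -filter_predI; congr size; apply: eq_filter => x /=.
by rewrite andbT.
Qed.

Lemma deg_lt n k k' : (k < k')%N -> (2 * k' <= n.+1)%N ->
  (#|[set u | adj (circ n.+1 k) ord0 u]| < #|[set u | adj (circ n.+1 k') ord0 u]|)%N.
Proof.
move=> hk hk'.
have Hk'n : (k' < n.+1)%N by lia.
have Hcd : cd (ord0 : 'I_n.+1) (Ordinal Hk'n) = k'.
  have H1 : (n.+1 - k' < n.+1)%N by lia.
  rewrite /cd /= add0n subn0 modnDr (modn_small Hk'n) (modn_small H1).
  by apply/minn_idPr; lia.
apply: proper_card; apply/properP; split.
  apply/subsetP => u; rewrite !inE !adj_circ => /andP[-> H] /=.
  exact: leq_trans H (ltnW hk).
exists (Ordinal Hk'n); rewrite !inE !adj_circ /=.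
  rewrite Hcd.
  rewrite leqnn andbT; apply/eqP => /(congr1 val) /=; lia.
rewrite Hcd.
by rewrite negb_and leqNgt hk orbT.
Qed.

Lemma colour_inj Fs n k k' t : (2 * k <= n.+1)%N -> (2 * k' <= n.+1)%N ->
  wl Fs (circ n.+1 k) t.+1 ord0 = wl Fs (circ n.+1 k') t.+1 ord0 -> k = k'.
Proof.
move=> hk hk' /= [_ /(congr1 size)]; rewrite !size_sort !size_map !sizeP => Hd.
case: (ltngtP k k') => // H.
  by have := deg_lt H hk'; rewrite Hd ltnn.
by have := deg_lt H hk; rewrite Hd ltnn.
Qed.

Lemma mem_cl Fs n T (G : graph n) t v : (t <= T)%N -> (t, wl Fs G t v) \in colour_list Fs n T.
Proof.
move=> Ht; rewrite /colour_list mem_undup; apply/flatten_mapP; exists t.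
  by rewrite mem_iota add0n ltnS.
apply/flatten_mapP; exists G; first by rewrite mem_enum.
by apply: (map_f (fun v => (t, wl Fs G t v))); rewrite mem_enum.
Qed.

Lemma cl_round Fs n T x : x \in colour_list Fs n T -> (x.1 <= T)%N.
Proof.
rewrite mem_undup => /flatten_mapP [t]; rewrite mem_iota add0n ltnS => /andP[_ Ht].
by move=> /flatten_mapP [G _] /mapP [v _ ->].
Qed.

Lemma giso_refl n (G : graph n) : giso G G.
Proof. by apply/existsP; exists 1%g; apply/forallP=> x; apply/forallP => y; rewrite !perm1. Qed.

Lemma uclass_proof n (G : graph n) :
  [exists G0, [set G' | giso G G'] == [set G' | giso G0 G']].
Proof. by apply/existsP; exists G. Qed.

Definition uclass n (G : graph n) : ugraph n :=
  exist _ [set G' | giso G G'] (uclass_proof G).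

Lemma uclass_giso n (G G' : graph n) : G' \in sval (uclass G) ->
  exists s : {perm 'I_n}, forall x y, adj G x y = adj G' (s x) (s y).
Proof.
rewrite /= inE => /existsP [s /forallP Hs]; exists s => x y; apply/eqP.
by move/forallP: (Hs x) => /(_ y).
Qed.

Lemma uniform_iso Fs n (G G' : graph n) (c : nat -> colour) :
  (forall t v, wl Fs G t v = c t) -> G' \in sval (uclass G) ->
  forall t v, wl Fs G' t v = c t.
Proof.
move=> Hc /uclass_giso [s Hs] t v.
by rewrite -(permKV s v) -(wl_iso _ Hs); exact: Hc.
Qed.


Local Open Scope ring_scope.


Lemma phi_uclass Fs n T (G : graph n) (c : nat -> colour) :
  (forall t v, wl Fs G t v = c t) ->
  forall i, @phi Fs n T (uclass G) i = if (ssval i).2 == c (ssval i).1 then (n%:R : R) else 0.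
Proof.
move=> Hc i; rewrite /phi; case: pickP => [G' HG' | H0]; last first.
  by have := H0 G; rewrite /= inE giso_refl.
have Hc' := uniform_iso Hc HG'.
rewrite /phiL; case: eqP => H.
  have -> : [set v | wl Fs G' (ssval i).1 v == (ssval i).2] = [set: 'I_n].
    by apply/setP => v; rewrite !inE Hc' H eqxx.
  by rewrite cardsT card_ord.
have -> : [set v | wl Fs G' (ssval i).1 v == (ssval i).2] = set0.
  apply/setP => v; rewrite !inE Hc'; apply/negbTE/eqP => H'; apply: H; by rewrite H'.
by rewrite cards0.
Qed.

Lemma count_idx Fs n T (G : graph n) (c : nat -> colour) (v0 : 'I_n) :
  (forall t v, wl Fs G t v = c t) ->
  #|[set i : cindex Fs n T | (ssval i).2 == c (ssval i).1]| = T.+1.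
Proof.
move=> Hc.
have Ht : forall t : 'I_T.+1, (val t <= T)%N by move=> t; rewrite -ltnS; apply: ltn_ord.
pose f := fun t : 'I_T.+1 => SeqSub (@mem_cl Fs n T G t v0 (Ht t)).
have finj : injective f.
  by move=> t1 t2 /(congr1 (fun i => (ssval i).1)) /= /val_inj.
have -> : [set i : cindex Fs n T | (ssval i).2 == c (ssval i).1] = [set f t | t in [set: 'I_T.+1]].
  apply/setP => i; rewrite inE; apply/idP/imsetP.
    move=> /eqP Hi; have Hr := cl_round (ssvalP i).
    have Hr' : ((ssval i).1 < T.+1)%N by rewrite ltnS.
    exists (Ordinal Hr'); first by rewrite inE.
    apply: val_inj; rewrite /= Hc -Hi; by case: (ssval i).
  by move=> [t _ ->]; rewrite /= Hc eqxx.
by rewrite card_imset // cardsT card_ord.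
Qed.

Lemma norm2_phi Fs n T (G : graph n) (c : nat -> colour) (v0 : 'I_n) :
  (forall t v, wl Fs G t v = c t) ->
  norm2 (@phi Fs n T (uclass G)) = n%:R ^+ 2 * T.+1%:R.
Proof.
move=> Hc.
rewrite /norm2 (eq_bigr (fun i => if (ssval i).2 == c (ssval i).1 then n%:R ^+ 2 else 0));
  last by move=> i _; rewrite (phi_uclass Hc); case: ifP => _; rewrite ?expr0n.
rewrite -big_mkcond /= sumr_const.
rewrite -(count_idx T v0 Hc) [RHS]mulr_natr; congr (_ *+ _).
by apply: eq_card => i; rewrite inE.
Qed.

Definition ck Fs n k t : colour := wl Fs (circ n.+1 k) t ord0.

Definition Cs n m (k : 'I_m) : ugraph n.+1 := uclass (circ n.+1 k).

Definition idx Fs n T m (p : 'I_T * 'I_m) : cindex Fs n.+1 T :=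
  SeqSub (@mem_cl Fs n.+1 T (circ n.+1 p.2) p.1.+1 ord0 (ltn_ord p.1)).

Lemma ck_inj Fs n m t (k k' : 'I_m) : (2 * m <= n.+1)%N ->
  ck Fs n k t.+1 = ck Fs n k' t.+1 -> k = k'.
Proof.
move=> Hm /colour_inj H; apply: val_inj; apply: H; apply: leq_trans Hm;
  by rewrite leq_mul2l ltnW.
Qed.

Lemma Cs_inj n m : (2 * m <= n.+1)%N -> injective (@Cs n m).
Proof.
move=> Hm k1 k2 E.
have H2 : circ n.+1 k2 \in sval (Cs n k1) by rewrite E /= inE giso_refl.
have Hc1 : forall t v, wl [::] (circ n.+1 k1) t v = ck [::] n k1 t.
  by move=> t v; rewrite /ck wl_circ_uniform.
have := uniform_iso Hc1 H2 1 ord0; rewrite -/(ck [::] n k2 1) => H.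
by apply: (ck_inj (Fs := [::]) (t := 0) Hm); rewrite H.
Qed.

Lemma idx_inj Fs n T m : (2 * m <= n.+1)%N -> injective (@idx Fs n T m).
Proof.
move=> Hm [t1 k1] [t2 k2] /(congr1 val) E.
have Et : t1 = t2.
  by apply: val_inj; move: (congr1 fst E) => /= [].
subst t2.
have E2 : ck Fs n k1 t1.+1 = ck Fs n k2 t1.+1 by move: (congr1 snd E).
by rewrite (ck_inj Hm E2).
Qed.

Lemma phi_val Fs n T m t (k k' : 'I_m) : (2 * m <= n.+1)%N ->
  @phi Fs n.+1 T (Cs n k') (@idx Fs n T m (t, k)) = if k' == k then (n.+1)%:R else 0.
Proof.
move=> Hm.
have Hc : forall t v, wl Fs (circ n.+1 k') t v = ck Fs n k' t.
  by move=> t0 v; rewrite /ck wl_circ_uniform.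
rewrite (phi_uclass Hc) /=.
have -> : (ck Fs n k t.+1 == ck Fs n k' t.+1) = (k' == k).
  apply/eqP/eqP => [/(ck_inj Hm) -> //| -> //].
done.
Qed.

Lemma norm2_Cs Fs n T m (k : 'I_m) :
  norm2 (@phi Fs n.+1 T (Cs n k)) = (n.+1)%:R ^+ 2 * T.+1%:R.
Proof.
have Hc : forall t v, wl Fs (circ n.+1 k) t v = ck Fs n k t.
  by move=> t0 v; rewrite /ck wl_circ_uniform.
exact: (norm2_phi T ord0 Hc).
Qed.

Lemma enorm_Cs Fs n T m (k : 'I_m) :
  enorm (@phi Fs n.+1 T (Cs n k)) = (n.+1)%:R * Num.sqrt (T.+1)%:R.
Proof.
rewrite /enorm -/(norm2 _) norm2_Cs sqrtrM ?sqr_ge0 // sqrtr_sqr ger0_norm //.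
Qed.

Lemma sqrtT_gt0 T : 0 < Num.sqrt (T.+1)%:R :> R.
Proof. by rewrite sqrtr_gt0 ltr0n. Qed.

Lemma phibar_val Fs n T m t (k k' : 'I_m) : (2 * m <= n.+1)%N ->
  @phibar Fs n.+1 T (Cs n k') (@idx Fs n T m (t, k))
  = if k' == k then 1 / Num.sqrt (T.+1)%:R else 0.
Proof.
move=> Hm; rewrite /phibar phi_val // enorm_Cs.
have h1 := sqrtT_gt0 T.
have h2 : (n.+1)%:R != 0 :> R by rewrite pnatr_eq0.
case: eqP => _; last by rewrite mul0r.
field; rewrite (lt0r_neq0 h1) /=; rewrite -natr1 addrC in h2; exact: h2.
Qed.

Lemma edist_phi Fs n T m (k : 'I_m) :
  edist (@phi Fs n.+1 T (Cs n k)) (fun _ => 0) = (n.+1)%:R * Num.sqrt (T.+1)%:R.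
Proof.
rewrite /edist -(@enorm_Cs Fs n T m k); congr enorm; apply: funext => i; by rewrite subr0.
Qed.

Lemma edist_phibar Fs n T m (k : 'I_m) :
  edist (@phibar Fs n.+1 T (Cs n k)) (fun _ => 0) = 1.
Proof.
rewrite /edist.
have -> : (fun i => @phibar Fs n.+1 T (Cs n k) i - 0)
   = (fun i => (enorm (@phi Fs n.+1 T (Cs n k)))^-1 * @phi Fs n.+1 T (Cs n k) i).
  by apply: funext => i; rewrite subr0 /phibar mulrC.
set e := enorm (@phi Fs n.+1 T (Cs n k)).
rewrite {1}/enorm -/(norm2 _) norm2_scale.
have he : e = (n.+1)%:R * Num.sqrt (T.+1)%:R by rewrite /e enorm_Cs.
have e0 : 0 < e by rewrite he mulr_gt0 ?ltr0n ?sqrtT_gt0.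
have -> : norm2 (@phi Fs n.+1 T (Cs n k)) = e ^+ 2.
  by rewrite /e /enorm -/(norm2 _) sqr_sqrtr // norm2_ge0.
rewrite exprVn mulVf ?sqrtr1 //.
by rewrite expf_neq0 // lt0r_neq0.
Qed.


Lemma VC_upper (X I : finType) (f : X -> vec I) (r lam : R) :
  0 < lam -> 1 <= r ^+ 2 / lam ^+ 2 ->
  (VCdim (Hclass r lam (fun e => e = f)))%:R <= 3 * (r ^+ 2 / lam ^+ 2).
Proof.
move=> lam0 H1; rewrite /VCdim.
apply: (big_ind (fun v : nat => v%:R <= 3 * (r ^+ 2 / lam ^+ 2))).
- rewrite mulr0n; lra.
- by move=> a b Ha Hb; rewrite /maxn; case: ifP.
- move=> S /asboolP HS; have := upper lam0 HS; lra.
Qed.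

Lemma trunc_facts (z : R) : 0 <= z ->
  (Num.truncn z)%:R <= z /\ z < (Num.truncn z)%:R + 1.
Proof.
move=> z0; have /andP[h1 h2] := truncn_itv z0; split => //.
by move: h2; rewrite -natr1.
Qed.

Lemma lower_i Fs T n (lam : R) : (0 < T)%N -> 0 < lam ->
  T.+1%:R * (n.+1)%:R ^+ 2 / lam ^+ 2 <= (n.+1)%:R ->
  4 <= T.+1%:R * (n.+1)%:R ^+ 2 / lam ^+ 2 ->
  T.+1%:R * (n.+1)%:R ^+ 2 / lam ^+ 2 / 4 <=
  (VCdim (Hclass (Num.sqrt T.+1%:R * (n.+1)%:R) lam (@E_WL Fs n.+1 T)))%:R.
Proof.
move=> T0 lam0.
set x := T.+1%:R * (n.+1)%:R ^+ 2 / lam ^+ 2 => Hn HK.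
set Nr := (n.+1)%:R : R.
have l2 : 0 < lam ^+ 2 by rewrite exprn_gt0.
have Hx : lam ^+ 2 * x = T.+1%:R * Nr ^+ 2.
  by rewrite /x; field; rewrite lt0r_neq0.
have hx2 : 0 <= x / 2 by lra.
have [hm1 hm2] := trunc_facts hx2.
set m := Num.truncn (x / 2) in hm1 hm2.
have m0 : (0 < m)%N by rewrite -(ltr_nat R); lra.
have Hm : (2 * m <= n.+1)%N by rewrite -(ler_nat R) natrM; lra.
have Tr : 1 <= T%:R :> R by rewrite ler1n.
have Hlm : lam ^+ 2 * m%:R <= T%:R * Nr ^+ 2.
  have h1 : lam ^+ 2 * m%:R <= lam ^+ 2 * (x / 2) by rewrite ler_wpM2l // ltW.
  have h2 : 0 <= (T%:R - 1) * Nr ^+ 2 by rewrite mulr_ge0 ?sqr_ge0 // subr_ge0.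
  rewrite -natr1 in Hx; lra.
have := @shatter_lower _ _ T m (@phi Fs n.+1 T) (@Cs n m) (@idx Fs n T m) Nr
   (Num.sqrt T.+1%:R * (n.+1)%:R) lam (Cs_inj Hm) (@idx_inj Fs n T m Hm)
   (fun t k k' => @phi_val Fs n T m t k k' Hm) _ m0 (ltW lam0) Hlm.
move=> H; rewrite /E_WL.
have Hb : forall k : 'I_m, edist (@phi Fs n.+1 T (Cs n k)) (fun _ => 0) <= Num.sqrt T.+1%:R * (n.+1)%:R.
  by move=> k; rewrite edist_phi mulrC.
have := H Hb; rewrite -(ler_nat R) => H2.
apply: (le_trans _ H2); lra.
Qed.

Lemma lower_ii Fs T n (lam : R) : (0 < T)%N -> 0 < lam ->
  T%:R / T.+1%:R / lam ^+ 2 <= (n.+1)%:R ->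
  8 <= 1 / lam ^+ 2 ->
  1 / 8 * (1 / lam ^+ 2) <= (VCdim (Hclass 1 lam (@Ebar_WL Fs n.+1 T)))%:R.
Proof.
move=> T0 lam0.
set y := 1 / lam ^+ 2 => Hn HK.
have l2 : 0 < lam ^+ 2 by rewrite exprn_gt0.
have Tr : 1 <= T%:R :> R by rewrite ler1n.
set r2 := T%:R / T.+1%:R : R.
have r2h : 1 / 2 <= r2.
  have eT : T.+1%:R = T%:R + 1 :> R by rewrite -natr1.
  rewrite /r2 eT ler_pdivlMr; lra.
have r2y : r2 / lam ^+ 2 = r2 * y by rewrite /y mul1r.
rewrite r2y in Hn.
have Hy : lam ^+ 2 * y = 1 by rewrite /y; field; rewrite lt0r_neq0.
have hy4 : 0 <= y / 4 by lra.
have [hm1 hm2] := trunc_facts hy4.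
set m := Num.truncn (y / 4) in hm1 hm2.
have m0 : (0 < m)%N by rewrite -(ltr_nat R); lra.
have Hm : (2 * m <= n.+1)%N.
  rewrite -(ler_nat R) natrM.
  have : 0 <= (r2 - 1 / 2) * y by rewrite mulr_ge0 // ?subr_ge0; lra.
  lra.
set alpha := 1 / Num.sqrt (T.+1)%:R : R.
have ha : T%:R * alpha ^+ 2 = r2.
  rewrite /alpha expr_div_n expr1n sqr_sqrtr ?ler0n //.
  by rewrite /r2 mul1r.
have Hlm : lam ^+ 2 * m%:R <= T%:R * alpha ^+ 2.
  rewrite ha.
  have h1 : lam ^+ 2 * m%:R <= lam ^+ 2 * (y / 4) by rewrite ler_wpM2l // ltW.
  lra.
have Hb : forall k : 'I_m, edist (@phibar Fs n.+1 T (Cs n k)) (fun _ => 0) <= 1.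
  by move=> k; rewrite edist_phibar.
have := @shatter_lower _ _ T m (@phibar Fs n.+1 T) (@Cs n m) (@idx Fs n T m) alpha
   1 lam (Cs_inj Hm) (@idx_inj Fs n T m Hm)
   (fun t k k' => @phibar_val Fs n T m t k k' Hm) Hb m0 (ltW lam0) Hlm.
rewrite -(ler_nat R) /Ebar_WL => H2.
apply: (le_trans _ H2); lra.
Qed.

Theorem corollary5 (Fs : seq anygraph) :
  (exists c1 c2 K : Rdefinitions.R, [/\ 0 < c1, 0 < c2 &
     forall (T n : nat) (lam : Rdefinitions.R), (0 < T)%N -> 0 < lam ->
       let r := Num.sqrt (T.+1)%:R * n%:R in
       r ^+ 2 / lam ^+ 2 <= n%:R -> K <= r ^+ 2 / lam ^+ 2 ->
       c1 * (r ^+ 2 / lam ^+ 2) <= (VCdim (Hclass r lam (@E_WL Fs n T)))%:R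
       <= c2 * (r ^+ 2 / lam ^+ 2)]) /\
  (exists c1 c2 K : Rdefinitions.R, [/\ 0 < c1, 0 < c2 &
     forall (T n : nat) (lam : Rdefinitions.R), (0 < T)%N -> 0 < lam ->
       let r := Num.sqrt (T%:R / (T.+1)%:R) in
       r ^+ 2 / lam ^+ 2 <= n%:R -> K <= 1 / lam ^+ 2 ->
       c1 * (1 / lam ^+ 2) <= (VCdim (Hclass 1 lam (@Ebar_WL Fs n T)))%:R
       <= c2 * (1 / lam ^+ 2)]).
Proof.
split.
- exists (1 / 4), 3, 4; split; [lra | lra |].
  move=> T [|n] lam T0 lam0 /=.
    rewrite mulr0n mulr0 expr0n /= mul0r; lra.
  have Hr2 : (Num.sqrt (T.+1%:R : R) * (n.+1)%:R) ^+ 2 = T.+1%:R * (n.+1)%:R ^+ 2.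
    by rewrite exprMn sqr_sqrtr ?ler0n.
  move=> Hn HK; apply/andP; split.
    rewrite Hr2 in Hn HK *.
    have := lower_i Fs T0 lam0 Hn HK => H.
    apply: (le_trans _ H); lra.
  rewrite /E_WL; apply: VC_upper => //; lra.
- exists (1 / 8), 3, 8; split; [lra | lra |].
  have l2 : forall lam : R, 0 < lam -> 0 < lam ^+ 2 by move=> lam ?; rewrite exprn_gt0.
  move=> T [|n] lam T0 lam0 /=.
    rewrite sqr_sqrtr ?divr_ge0 ?ler0n // => H.
    have : 0 < T%:R / T.+1%:R / lam ^+ 2.
      by rewrite !divr_gt0 ?ltr0n ?l2.
    by move=> H2; rewrite mulr0n in H; have := lt_le_trans H2 H; rewrite ltxx.
  rewrite sqr_sqrtr ?divr_ge0 ?ler0n // => Hn HK; apply/andP; split.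
    exact: lower_ii.
  have := @VC_upper _ _ (@phibar Fs n.+1 T) 1 lam lam0.
  rewrite expr1n /Ebar_WL => H; apply: H; lra.
Qed.
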